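(* Let $p>2$ be a prime number. Let $n\geq 0$ and $m\geq 1$ be integers, let $G$ be a finite $p$-group, let $f\in\mathcal{F}_G$, and let $H, C_1, C_2,\ldots, C_{p-1}$ be normal subgroups of $G$ such that: (1) $C_i\subsetneq H$ for all $1\leq i\leq p-1$; (2) $\displaystyle\max_{g\in H\setminus\left(\bigcup_{i=1}^{p-1}C_i\right)} b_{f(H,m)}(g)\leq n$. Then there exists a normal subgroup $N$ of $G$ such that: (a) $N\subseteq H$; (b) $\log_p|H:N|\leq n$; (c) $cl_f(N)\leq n+m$; (d) $N\not\subseteq\bigcup_{i=1}^{p-1}C_i$.
   Context: For a finite group $G$, $Z_G(x)$ is the centralizer of $x$ in $G$, and for a subset (or subgroup) $H$, $Z_G(H)=\bigcap_{h\in H}Z_G(h)$. Commutators are $[x,y]=x^{-1}y^{-1}xy$, and for subgroups $G_1,G_2$, $[G_1,G_2]$ is the subgroup generated by all $[g_1,g_2]$ with $g_i\in G_i$. For $g\in G$ and a subgroup $K$ of $G$, $b_K(g):=\log_p|K : K\cap Z_G(g)|$. $\mathcal{F}_G$ denotes the set of all functions $f$ from (normal subgroups of $G$) $\times\,\mathbb{N}_{\geq1}$ to (normal subgroups of $G$) such that: (i) $f(N,i)\subseteq f(M,j)$ whenever $N\subseteq M$ are normal subgroups of $G$ and $1\leq j\leq i$; (ii) $[N,f(N,i)]\neq[N,f(N,i+1)]$ for every normal subgroup $N$ of $G$ and every integer $i\geq1$ with $f(N,i)\not\subseteq Z_G(N)$. For $f\in\mathcal{F}_G$ and a normal subgroup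 $N$ of $G$, $cl_f(N):=\min\{n\in\mathbb{N} : f(N,n)\subseteq Z_G(N)\}$. *)

(* Defs.v *)
From mathcomp Require Import all_boot all_fingroup all_solvable.
Set Implicit Arguments. Unset Strict Implicit. Unset Printing Implicit Defensive.
Local Open Scope group_scope.

(* Z_G(N) is 'C_G(N); [G1,G2] is [~: G1, G2]. *)

Definition bK (gT : finGroupType) (p : nat) (G K : {set gT}) (g : gT) : nat :=
  logn p #|K : K :&: 'C_G[g]|.

(* f ∈ F_G.  f is given on all subgroups and all naturals; only its values
   on normal subgroups of G and indices i >= 1 matter. *)
Definition in_FG (gT : finGroupType) (G : {group gT})
    (f : {group gT} -> nat -> {group gT}) : Prop :=
  [/\ (forall (N : {group gT}) i, N <| G -> 0 < i -> f N i <| G),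
      (forall (N M : {group gT}) i j, N <| G -> M <| G -> N \subset M ->
          0 < j -> j <= i -> f N i \subset f M j)
    & (forall (N : {group gT}) i, N <| G -> 0 < i ->
          ~~ (f N i \subset 'C_G(N)) ->
          [~: N, f N i] != [~: N, f N i.+1])].

(* "cl_f(N) <= k", i.e. min {n >= 1 : f(N,n) ⊆ Z_G(N)} <= k *)
Definition clf_le (gT : finGroupType) (G : {group gT})
    (f : {group gT} -> nat -> {group gT}) (N : {group gT}) (k : nat) : Prop :=
  exists2 i, 0 < i <= k & f N i \subset 'C_G(N).

(* Main.v *)
Require Import Defs.
From mathcomp Require Import all_boot all_fingroup all_solvable.
From mathcomp Require Import zify.
Set Implicit Arguments. Unset Strict Implicit. Unset Printing Implicit Defensive.
Local Open Scope group_scope.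

Lemma pnat_exp (p n : nat) : p.-nat n -> n = (p ^ logn p n)%N.
Proof. by move=> pn; rewrite -p_part part_pnat_id. Qed.

Lemma logn_mono (p a b : nat) : prime p -> p.-nat a -> p.-nat b -> (a <= b)%N ->
  (logn p a <= logn p b)%N.
Proof.
move=> pp pa pb ab; rewrite -(leq_exp2l _ _ (prime_gt1 pp)) -(pnat_exp pa) -(pnat_exp pb) //.
Qed.

Lemma logn_mono_inv (p a b : nat) : prime p -> p.-nat a -> p.-nat b ->
  (logn p a <= logn p b)%N -> (a <= b)%N.
Proof.
move=> pp pa pb; rewrite -(leq_exp2l _ _ (prime_gt1 pp)) -(pnat_exp pa) -(pnat_exp pb).
done.
Qed.

Lemma pnat_ge (p n : nat) : prime p -> p.-nat n -> (1 < n)%N -> (p <= n)%N.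
Proof.
move=> pp pn; rewrite {2}(pnat_exp pn); case e: (logn p n) => [|k].
  by rewrite (pnat_exp pn) e.
by move=> _; rewrite -{1}(expn1 p) leq_exp2l ?prime_gt1.
Qed.

Lemma arith (a b P i1 i2 K1 K2 : nat) : (0 < a)%N -> (a * i1 = K1)%N -> (b * i2 = K2)%N ->
  (K1 * b = P * a)%N -> (i2 <= i1)%N -> (K2 <= P)%N.
Proof.
move=> a0 e1 e2 e3 le; have : (a * (i1 * b) = a * P)%N by rewrite mulnA e1 e3 mulnC.
move/eqP; rewrite eqn_pmul2l // => /eqP <-.
by rewrite -e2 [(b * _)%N]mulnC; apply: leq_mul.
Qed.

Section S.
Variable gT : finGroupType.
Implicit Types G H K D X Y : {group gT}.

Lemma index_mono K1 K2 (D : {set gT}) : K1 \subset K2 -> (#|K1 : D| <= #|K2 : D|)%N.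
Proof. by move=> s; apply: subset_leq_card; apply: imsetS. Qed.

Lemma index_pnat (p : nat) G K D : p.-group G -> K \subset G -> p.-nat #|K : D|.
Proof. by move=> pG sKG; apply: pnat_dvd (dvdn_indexg _ _) (pgroupS sKG pG). Qed.

Lemma bK_mono (p : nat) G K1 K2 g : prime p -> p.-group G -> K1 \subset K2 -> K2 \subset G ->
  (bK p G K1 g <= bK p G K2 g)%N.
Proof.
move=> pp pG s12 s2; rewrite /bK !indexgI; apply: logn_mono => //.
- by apply: index_pnat pG (subset_trans s12 s2).
- by apply: index_pnat pG s2.
exact: index_mono.
Qed.

Lemma proper_card (p : nat) H X : prime p -> p.-group H -> X \proper H -> (#|X| * p <= #|H|)%N.
Proof.
move=> pp pH /andP[sXH nHX].
rewrite -(Lagrange sXH) leq_mul2l; apply/orP; right.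
apply: pnat_ge => //; first exact: index_pnat pH (subxx _).
by rewrite indexg_gt1.
Qed.

Lemma card_bigcup_le k (A : nat -> {set gT}) :
  (#|\bigcup_(i < k) A i| <= \sum_(i < k) #|A i|)%N.
Proof.
elim: k => [|k IH]; first by rewrite big_ord0 cards0.
rewrite big_ord_recr big_ord_recr /=.
apply: leq_trans (leq_card_setU _ _) _; exact: leq_add.
Qed.

Lemma cover (p : nat) H (X : nat -> {group gT}) : prime p -> p.-group H ->
  (forall i, (i < p)%N -> X i \proper H) ->
  exists2 x, x \in H & forall i, (i < p)%N -> x \notin X i.
Proof.
move=> pp pH prX.
case: (boolP [exists x in H, [forall i : 'I_p, x \notin X i]]).
  case/exists_inP=> x xH /forallP allx; exists x => // i ip.
  exact: (allx (Ordinal ip)).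
rewrite negb_exists_in => /forall_inP allH; exfalso.
have sub : H :\ 1 \subset \bigcup_(i < p) (X i :\ 1).
  apply/subsetP=> x /setD1P[x1 xH]; have := allH x xH.
  rewrite negb_forall => /existsP[i]; rewrite negbK => xX.
  by apply/bigcupP; exists i => //; apply/setD1P.
have c1 := subset_leq_card sub.
have c2 := card_bigcup_le p (fun i => X i :\ 1).
have c3 : (\sum_(i < p) #|X i :\ 1%g| + p = \sum_(i < p) #|X i|)%N.
  have e : p = (\sum_(i < p) 1)%N by rewrite sum1_card card_ord.
  rewrite [X in _ + X = _]e -big_split /=; apply: eq_bigr => i _.
  by rewrite (cardsD1 (1 : gT) (X i)) group1 addnC.
have c4 : (\sum_(i < p) (#|X i| * p) <= \sum_(i < p) #|H|)%N.
  by apply: leq_sum => i _; apply: proper_card => //; apply: prX.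
have p1 := prime_gt1 pp.
rewrite sum_nat_const card_ord mulnC -big_distrl /= leq_mul2r in c4.
move: c4; rewrite (gtn_eqF (ltnW p1)) /= => c4.
have hH := cardsD1 (1 : gT) H; rewrite group1 in hH.
have c5 : (#|H :\ 1%g| + p <= #|H|)%N.
  by rewrite (leq_trans _ c4) // -c3 leq_add2r (leq_trans c1 c2).
rewrite hH /= in c5; move: c5 p1; clear; rewrite add1n; move=> c5 p1.
by move: c5; rewrite -addn1 leq_add2l => /(leq_trans p1).
Qed.

Lemma ex_index_p (p : nat) G H X : prime p -> p.-group G -> H <| G -> X <| G ->
  X \proper H ->
  exists Y : {group gT}, [/\ Y <| G, X \subset Y, Y \subset H & #|H : Y| = p].
Proof.
move=> pp pG nHG nXG prXH.
have [sHG _] := andP nHG; have [sXG nXG'] := andP nXG.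
have nXH : H \subset 'N(X) := subset_trans sHG nXG'.
have sXH := proper_sub prXH.
have nHXGX : H / X <| G / X by apply: quotient_normal.
have pGX : p.-group (G / X) by apply: quotient_pgroup.
have cHX : #|H / X| = #|H : X| by rewrite card_quotient.
have pHX : p.-nat #|H / X| by apply: pgroupS (quotientS X sHG) pGX.
have gt1 : (1 < #|H / X|)%N by rewrite cHX indexg_gt1; case/andP: prXH.
set r := logn p #|H / X|.
have r1 : (0 < r)%N.
  rewrite /r; move: gt1; rewrite -{1}(part_pnat_id pHX) p_part.
  by case: (logn p _) => //; rewrite expn0.
have [Q [sQ nQ cQ]] := normal_pgroup pGX nHXGX (leq_pred r).
have [Y defQ sXY nYG] := inv_quotientN nXG nQ.
have nXY : Y \subset 'N(X) := subset_trans (normal_sub nYG) nXG'.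
have sYH : Y \subset H by rewrite -(quotientSGK nXY sXH) -defQ.
exists Y; split=> //.
have e1 : #|H / X| = (#|Y / X| * #|H / X : Y / X|)%N.
  by rewrite Lagrange // quotientS.
rewrite index_quotient_eq ?subIset ?sXY ?orbT // in e1.
move: e1; rewrite -defQ cQ -{1}(part_pnat_id pHX) p_part -/r -{1}(prednK r1) expnS => /eqP.
rewrite mulnC eqn_pmul2l ?expn_gt0 ?prime_gt0 //.
by move/eqP.
Qed.

Lemma index_p_central (p : nat) G H Y : prime p -> p.-group G -> H <| G -> Y <| G ->
  Y \subset H -> #|H : Y| = p -> [~: H, G] \subset Y.
Proof.
move=> pp pG nHG nYG sYH iHY.
have [sHG _] := andP nHG; have [sYG nYG'] := andP nYG.
have nYH : H \subset 'N(Y) := subset_trans sHG nYG'.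
rewrite -quotient_cents2 //.
have nQ : H / Y <| G / Y by apply: quotient_normal.
have cQ : #|H / Y| = p by rewrite card_quotient.
have nilG : nilpotent (G / Y) by apply: pgroup_nil (quotient_pgroup _ pG).
case: (boolP (H / Y \subset 'Z(G / Y))) => [sZ|nsZ].
  by apply: subset_trans sZ _; apply: subsetIr.
have TI : H / Y :&: 'Z(G / Y) = 1 by apply: prime_TIg => //; rewrite cQ.
have := TI_center_nil nilG nQ TI.
by move=> Q1; move: cQ; rewrite Q1 cards1 => p1; rewrite -p1 in pp.
Qed.

Lemma pow_index_p (p : nat) H Y x j : prime p -> Y \subset H -> H \subset 'N(Y) ->
  #|H : Y| = p -> x \in H -> x \notin Y -> (x ^+ j \in Y) = (p %| j).
Proof.
move=> pp sYH nYH iHY xH xY.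
have xN : x \in 'N(Y) := subsetP nYH x xH.
have ord : #[coset Y x] = p.
  have d : #[coset Y x] %| p by rewrite -iHY -card_quotient // order_dvdG // mem_quotient.
  case/primeP: pp => _ /(_ _ d) /orP[/eqP o1 | /eqP //].
  by move/eqP: o1; rewrite order_eq1 => /eqP /(coset_idr xN) xY'; rewrite xY' in xY.
apply/idP/idP.
  move=> xjY; rewrite -ord order_dvdn -morphX //; apply/eqP; exact: coset_id.
rewrite -ord order_dvdn -morphX // => /eqP e.
by apply: coset_idr; rewrite ?groupX.
Qed.

Lemma pow_p_in (p : nat) H Y x : prime p -> Y \subset H -> H \subset 'N(Y) ->
  #|H : Y| = p -> x \in H -> x ^+ p \in Y.
Proof.
move=> pp sYH nYH iHY xH.
have xN : x \in 'N(Y) := subsetP nYH x xH.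
have d : #[coset Y x] %| p by rewrite -iHY -card_quotient // order_dvdG // mem_quotient.
apply: coset_idr; first by rewrite groupX.
by rewrite morphX //; apply/eqP; rewrite -order_dvdn.
Qed.


Lemma bad_in (p : nat) G H K K' g : prime p -> p.-group G -> g \in H -> H \subset G ->
  K \subset G -> K' \subset K -> G \subset 'N([~: H, K']) ->
  (bK p G K g <= bK p G K' g)%N ->
  forall k, k \in K -> [~ g, k] \in [~: H, K'].
Proof.
move=> pp pG gH sHG sKG sK'K nB le k kK.
set D := 'C_G[g].
have sK'G := subset_trans sK'K sKG.
have le2 : (#|K : K :&: D| <= #|K' : K' :&: D|)%N.
  apply: (logn_mono_inv pp) le; [exact: index_pnat pG sKG | exact: index_pnat pG sK'G].
have e1 := Lagrange (subsetIl K' D).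
have e2 := Lagrange (subsetIl K D).
have e3 := mul_cardG K' (K :&: D).
have eI : K' :&: (K :&: D) = K' :&: D by rewrite setIA (setIidPl sK'K).
rewrite eI in e3.
have sM : K' * (K :&: D) \subset K by rewrite mul_subG // subIset ?subxx.
have cM : (#|K| <= #|(K' * (K :&: D))%g|)%N.
  have a0 := cardG_gt0 (K' :&: 'C_G[g])%G.
  exact: (arith a0 e1 e2 e3 le2).
have eM : K' * (K :&: D) = K by apply/eqP; rewrite eqEcard sM cM.
rewrite -eM in kK; case/mulsgP: kK => k' c k'K cKD ->.
rewrite commgMJ.
have cD : c \in 'C[g] by case/setIP: cKD => _ /setIP[].
have cG : c \in G by case/setIP: cKD => _ /setIP[].
have -> : [~ g, c] = 1.
  by apply/eqP/commgP; apply: commute_sym; apply/cent1P.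
rewrite mul1g memJ_norm; first exact: mem_commg.
exact: subsetP nB c cG.
Qed.


Lemma norm_of_sub (A : {set gT}) x : A :^ x \subset A -> x \in 'N(A).
Proof. by move=> s; apply/normP/eqP; rewrite eqEcard s cardJg leqnn. Qed.

Lemma norms_of_closed G (A : {set gT}) :
  (forall y h, y \in G -> h \in A -> h ^ y \in A) -> G \subset 'N(A).
Proof.
move=> cl; apply/subsetP=> y yG; apply: norm_of_sub; apply/subsetP=> z.
rewrite mem_conjg => zA; rewrite -(conjgKV y z); exact: cl.
Qed.

Lemma ex_A G H K (B : {group gT}) : H <| G -> K <| G -> G \subset 'N(B) ->
  exists A : {group gT}, [/\ A <| G, A \subset H &
    forall h, h \in A = (h \in H) && [forall k in K, [~ h, k] \in B]].
Proof.
move=> nHG nKG nBG; have [sHG nHG'] := andP nHG; have [sKG nKG'] := andP nKG.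
set A := [set h in H | [forall k in K, [~ h, k] \in B]].
have gA : group_set A.
  apply/group_setP; split.
    rewrite inE group1; apply/forall_inP => k _; by rewrite comm1g group1.
  move=> a b; rewrite !inE => /andP[aH /forall_inP aB] /andP[bH /forall_inP bB].
  rewrite groupM //; apply/forall_inP => k kK; rewrite commMgJ groupM ?bB //.
  by rewrite memJ_norm ?aB // (subsetP nBG) // (subsetP sHG).
exists (Group gA); split.
- rewrite /normal; apply/andP; split.
    by apply: subset_trans sHG; apply/subsetP=> h; rewrite inE => /andP[].
  apply: norms_of_closed => y h yG; rewrite !inE => /andP[hH /forall_inP hB].
  rewrite memJ_norm ?(subsetP nHG') // hH /=; apply/forall_inP => k kK.
  rewrite -(conjgKV y k) -conjRg memJ_norm ?(subsetP nBG) // hB //.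
  by rewrite memJ_norm ?(subsetP nKG') ?groupV.
- by apply/subsetP=> h; rewrite inE => /andP[].
by move=> h; rewrite inE.
Qed.

Lemma join_cap (p : nat) H Y1 Y2 x : prime p -> Y1 \subset H -> Y2 \subset H ->
  H \subset 'N(Y1) -> H \subset 'N(Y2) -> #|H : Y1| = p -> #|H : Y2| = p ->
  x \in H -> x \notin Y1 -> x \notin Y2 ->
  ((Y1 :&: Y2) <*> <[x]>) :&: Y1 \subset Y1 :&: Y2.
Proof.
move=> pp s1 s2 n1 n2 i1 i2 xH x1 x2.
have nW : <[x]> \subset 'N(Y1 :&: Y2).
  rewrite cycle_subG; have nHW : H \subset 'N(Y1 :&: Y2) := normsI n1 n2.
  exact: subsetP nHW x xH.
rewrite norm_joinEr //; apply/subsetP=> g /setIP[/mulsgP[w xj wW /cycleP[j ->] ->] gY].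
have wY1 : w \in Y1 by case/setIP: wW.
have : x ^+ j \in Y1 by rewrite -(groupMl _ wY1).
rewrite (pow_index_p _ pp s1 n1 i1 xH x1) => pj.
have : x ^+ j \in Y2 by rewrite (pow_index_p _ pp s2 n2 i2 xH x2).
move=> xj2; rewrite groupM //; apply/setIP; split => //.
by rewrite (pow_index_p _ pp s1 n1 i1 xH x1).
Qed.


Lemma done_case (p n k m : nat) G (f : {group gT} -> nat -> {group gT}) H
    (C : nat -> {group gT}) :
  prime p -> p.-group G -> H <| G ->
  (forall i, (0 < i < p)%N -> C i \proper H) ->
  (0 < m)%N -> (m <= k)%N -> f H m \subset 'C_G(H) ->
  exists N : {group gT},
    [/\ N <| G, N \subset H, (logn p #|H : N| <= n)%N, clf_le G f N k
      & exists2 x, x \in N & forall i, (0 < i < p)%N -> x \notin C i].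
Proof.
move=> pp pG nHG prCH m0 mk cK.
have p1 := prime_gt1 pp.
have pH : p.-group H := pgroupS (normal_sub nHG) pG.
have prX : forall i, (i < p)%N -> C (maxn i 1) \proper H.
  by move=> i ip; apply: prCH; rewrite leq_max leqnn orbT /= gtn_max ip p1.
have [x xH xC] := cover pp pH prX.
exists H; split=> //.
- by rewrite indexgg logn1.
- by exists m => //; rewrite m0 mk.
exists x => // i /andP[i0 ip]; have := xC i ip; rewrite (maxn_idPl i0) //.
Qed.


End S.

Unset Implicit Arguments. Set Strict Implicit.

Theorem theorem1 (gT : finGroupType) (p n m : nat) (G : {group gT})
    (f : {group gT} -> nat -> {group gT}) (H : {group gT})
    (C : nat -> {group gT}) :
  prime p -> 2 < p -> (0 < m)%N -> p.-group G -> in_FG G f ->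
  H <| G ->
  (forall i, (0 < i < p)%N -> C i <| G) ->
  (forall i, (0 < i < p)%N -> C i \proper H) ->
  (forall g, g \in H -> (forall i, (0 < i < p)%N -> g \notin C i) ->
     (bK p G (f H m) g <= n)%N) ->
  exists N : {group gT},
    [/\ N <| G, N \subset H, (logn p #|H : N| <= n)%N, clf_le G f N (n + m)
      & exists2 x, x \in N & forall i, (0 < i < p)%N -> x \notin C i].
Proof.
move=> pp p2 m0 pG fG nHG nCG prCH hb.
have p1 := prime_gt1 pp.
case: fG => fN fmono fstrict.
elim: n m H C m0 nHG nCG prCH hb => [|n IH] m H C m0 nHG nCG prCH hb.
  case: (boolP (f H m \subset 'C_G(H))) => [cK|ncK].
    exact: done_case pp pG nHG prCH m0 (leq_addl 0 m) cK.
  exfalso.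
  have nK := fN H m nHG m0; have [sKG _] := andP nK.
  have pH : p.-group H := pgroupS (normal_sub nHG) pG.
  case: (boolP (H \subset 'C(f H m))) => [cHK | ncHK].
    by apply: (negP ncK); rewrite subsetI sKG centsC.
  have prL : 'C_H(f H m) \proper H.
    by rewrite properE subsetIl /= subsetI subxx.
  have prX : forall i, (i < p)%N ->
      (if i == 0 then ('C_H(f H m))%G else C i) \proper H.
    by move=> [|i] ip //=; apply: prCH.
  have [x xH xX] := cover pp pH prX.
  have xC : forall i, (0 < i < p)%N -> x \notin C i.
    by move=> [|i] // /andP[_ ip]; have := xX i.+1 ip.
  have := hb x xH xC; rewrite leqn0 /bK => /eqP l0.
  have pI : p.-nat #|f H m : f H m :&: 'C_G[x]| := index_pnat _ pG sKG.
  have : #|f H m : f H m :&: 'C_G[x]| == 1%N by rewrite (pnat_exp pI) l0.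
  rewrite indexg_eq1 subsetI subxx /= => /subsetP sK.
  have : x \in 'C_H(f H m).
    rewrite inE xH -sub_cent1; apply/subsetP=> k kK.
    by case/setIP: (sK k kK).
  by apply/negP; have := xX 0 (ltnW p1).
case: (boolP (f H m \subset 'C_G(H))) => [cK|ncK].
  exact: done_case pp pG nHG prCH m0 (leq_addl n.+1 m) cK.
have [sHG nHG'] := andP nHG.
have pH : p.-group H := pgroupS sHG pG.
have nK := fN H m nHG m0; have [sKG nKG'] := andP nK.
have nK' := fN H m.+1 nHG (ltn0Sn m); have [sK'G nK'G'] := andP nK'.
have sK'K := fmono H H m.+1 m nHG nHG (subxx _) m0 (leqnSn m).
have strict := fstrict H m nHG m0 ncK.
have nBG : G \subset 'N([~: H, f H m.+1]) by apply: normsR.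
have [A [nAG sAH defA]] := ex_A nHG nK (B := [~: H, f H m.+1]%G) nBG.
have prA : A \proper H.
  rewrite properE sAH /=; apply/negP => sHA; apply: (negP strict).
  rewrite eqEsubset (commgS _ sK'K) andbT gen_subG; apply/subsetP=> z.
  case/imset2P=> h k hH kK ->.
  by have := subsetP sHA h hH; rewrite defA => /andP[_ /forall_inP]; apply.
have badc : forall g, g \in H -> (forall i, (0 < i < p)%N -> g \notin C i) ->
    g \notin A -> (bK p G (f H m.+1) g <= n)%N.
  move=> g gH gC gA; rewrite leqNgt; apply/negP => lt; apply: (negP gA).
  rewrite defA gH; apply/forall_inP => k kK.
  have le : (bK p G (f H m) g <= bK p G (f H m.+1) g)%N.
    exact: leq_trans (hb g gH gC) lt.
  by have := bad_in pp pG gH sHG sKG sK'K nBG le kK.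
have C1 : (0 < 1 < p)%N by rewrite p1.
have [Mh [nMG sAM sMH iM]] := ex_index_p pp pG nHG nAG prA.
have [Ch [nChG sC1 sChH iC]] := ex_index_p pp pG nHG (nCG 1%N C1) (prCH 1%N C1).
have nMH : H \subset 'N(Mh) := subset_trans sHG (normal_norm nMG).
have nChH : H \subset 'N(Ch) := subset_trans sHG (normal_norm nChG).
have prM : Mh \proper H by rewrite properE sMH -indexg_gt1 iM p1.
have prCh : Ch \proper H by rewrite properE sChH -indexg_gt1 iC p1.
have prX : forall i, (i < p)%N ->
    (if i == 0 then Mh else if i == 1%N then Ch else C i) \proper H.
  by move=> [|[|i]] ip //=; apply: prCH.
have [x xH xX] := cover pp pH prX.
have xM : x \notin Mh by have := xX 0 (ltnW p1).
have xCh : x \notin Ch by have := xX 1%N p1.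
have xC : forall i, (1 < i < p)%N -> x \notin C i.
  by move=> [|[|i]] // /andP[_ ip]; have := xX i.+2 ip.
set W := (Mh :&: Ch)%G.
have nWG : W <| G := normalI nMG nChG.
set N' := (W <*> <[x]>)%G.
have sWN : W \subset N' := joing_subl _ _.
have xN : x \in N' := subsetP (joing_subr W <[x]>) x (cycle_id x).
have xW : x \notin W by rewrite inE (negbTE xM).
have sN'H : N' \subset H.
  by rewrite join_subG cycle_subG xH andbT (subset_trans (subsetIl _ _) sMH).
have cHG : [~: H, G] \subset W.
  by rewrite subsetI (index_p_central pp pG nHG nMG sMH iM)
     (index_p_central pp pG nHG nChG sChH iC).
have nN'G : N' <| G.
  rewrite /normal (subset_trans sN'H sHG) /=.
  apply/subsetP=> y yG; apply: norm_of_sub.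
  rewrite /= -genJ gen_subG conjUg subUset.
  rewrite (normP (subsetP (normal_norm nWG) y yG)) sWN /=.
  rewrite -cycleJ cycle_subG conjg_mulR groupM //.
  exact: subsetP sWN _ (subsetP cHG _ (mem_commg xH yG)).
have capM : N' :&: Mh \subset W := join_cap pp sMH sChH nMH nChH iM iC xH xM xCh.
have capC : N' :&: Ch \subset W.
  have := join_cap pp sChH sMH nChH nMH iC iM xH xCh xM.
  by rewrite [Ch :&: Mh]setIC.
have iN' : (logn p #|H : N'| <= 1)%N.
  have e1 := Lagrange_index sN'H sWN.
  have e2 := Lagrange_index sMH (subsetIl Mh Ch).
  have le3 : (#|Mh : Mh :&: Ch| <= p)%N by rewrite indexgI -iC; apply: index_mono.
  have ge4 : (p <= #|N' : W|)%N.
    apply: pnat_ge pp (index_pnat _ pG (subset_trans sN'H sHG)) _.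
    by rewrite indexg_gt1; apply/subsetPn; exists x.
  have le5 : (#|H : N'| <= p)%N.
    have : (#|H : N'| * p <= p * p)%N.
      apply: leq_trans (leq_mul (leqnn _) ge4) _.
      by rewrite e1 -e2 iM leq_mul2l le3 orbT.
    by rewrite mulnC leq_mul2l (gtn_eqF (prime_gt0 pp)).
  have -> : 1%N = logn p p by rewrite logn_prime // eqxx.
  exact: logn_mono pp (index_pnat _ pG sHG) (pnat_id pp) le5.
set C' := fun i => if i == 1%N then W else (N' :&: C i)%G.
have nC'G : forall i, (0 < i < p)%N -> C' i <| G.
  move=> i hi; rewrite /C'; case: (i == 1%N) => //; exact: normalI nN'G (nCG i hi).
have prC'N : forall i, (0 < i < p)%N -> C' i \proper N'.
  move=> i /andP[i0 ip]; rewrite /C'; case: eqP => [_ | i1].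
    by rewrite properE sWN; apply/subsetPn; exists x.
  rewrite properE subsetIl /=; apply/subsetPn; exists x => //.
  rewrite inE xN /= xC // ip andbT.
  by case: i i0 ip i1 => [|[|i]].
have gCsplit : forall g, g \in N' -> (forall i, (0 < i < p)%N -> g \notin C' i) ->
    (forall i, (0 < i < p)%N -> g \notin C i) /\ g \notin W.
  move=> g gN gC'; have gW : g \notin W by have := gC' 1%N C1.
  split=> // i /andP[i0 ip]; case: (eqVneq i 1%N) => [-> | i1].
    apply/negP => gC1; apply: (negP gW); apply: (subsetP capC).
    by rewrite inE gN (subsetP sC1).
  have := gC' i; rewrite /C' (negbTE i1) i0 ip => /(_ isT).
  by rewrite inE gN.
have hb' : forall g, g \in N' -> (forall i, (0 < i < p)%N -> g \notin C' i) ->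
    (bK p G (f N' m.+1) g <= n)%N.
  move=> g gN gC'; have [gC gW] := gCsplit g gN gC'.
  have gH := subsetP sN'H g gN.
  have gA : g \notin A.
    apply/negP => gA; apply: (negP gW); apply: (subsetP capM).
    by rewrite inE gN (subsetP sAM).
  apply: leq_trans (badc g gH gC gA).
  apply: bK_mono pp pG _ sK'G.
  exact: fmono N' H m.+1 m.+1 nN'G nHG sN'H (ltn0Sn m) (leqnn _).
have [N'' [nN''G sN''N lN'' clN'' [y yN'' yC']]] :=
  IH m.+1 N' C' (ltn0Sn m) nN'G nC'G prC'N hb'.
exists N''; split=> //.
- exact: subset_trans sN''N sN'H.
- rewrite -(Lagrange_index sN'H sN''N) lognM ?indexg_gt0 //.
  by rewrite -add1n leq_add.
- by rewrite addSnnS.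
exists y => //.
have yN := subsetP sN''N y yN''.
by have [] := gCsplit y yN yC'.
Qed.
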